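(* Let $k\ge1$, $t\ge 0$ and $n\ge kt$ be integers. Then $S(n,t,k)=k^t$. Moreover, if $F$ is a $t$-admissible $k$-CNF formula on $n$ variables with $|\mathrm{sat}_t(F)|=k^t$, then $F$ contains $t$ pairwise variable-disjoint clauses each of the form $(x_{i_1}\lor\dots\lor x_{i_k})$, i.e. consisting of $k$ distinct un-negated variables.
   Context: A $k$-CNF formula is a conjunction of clauses (disjunctions of literals) each of width at most $k$. $\mathrm{sat}_t(F)$ is the set of satisfying assignments of $F$ of Hamming weight exactly $t$. $F$ is $t$-admissible if it has no satisfying assignment of Hamming weight less than $t$. $S(n,t,k)$ is the maximum of $|\mathrm{sat}_t(F)|$ over all $t$-admissible $k$-CNF formulas $F$ on $n$ variables. *)

(* Defs.v *)
From mathcomp Require Import all_boot.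
Set Implicit Arguments. Unset Strict Implicit. Unset Printing Implicit Defensive.

(* A literal over variables x_0..x_{n-1}: (i, true) is x_i, (i, false) is ~x_i. *)
Definition lit (n : nat) := ('I_n * bool)%type.
Definition clause (n : nat) := {set lit n}.
Definition cnf (n : nat) := {set clause n}.
(* An assignment is represented by the set of variables assigned true;
   its Hamming weight is its cardinality. *)
Definition assignment (n : nat) := {set 'I_n}.

Definition lit_sat n (a : assignment n) (l : lit n) : bool := (l.1 \in a) == l.2.
Definition clause_sat n (a : assignment n) (C : clause n) : bool :=
  [exists l in C, lit_sat a l].
Definition cnf_sat n (a : assignment n) (F : cnf n) : bool :=
  [forall C in F, clause_sat a C].

Definition is_kCNF n (k : nat) (F : cnf n) : bool := [forall C in F, #|C| <= k].

Definition sat_t n (t : nat) (F : cnf n) : {set assignment n} :=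
  [set a : assignment n | cnf_sat a F && (#|a| == t)].

Definition admissible n (t : nat) (F : cnf n) : bool :=
  [forall a : assignment n, cnf_sat a F ==> (t <= #|a|)].

Definition S (n t k : nat) : nat :=
  \max_(F : cnf n | admissible t F && is_kCNF k F) #|sat_t t F|.

Definition pos_clause n (V : {set 'I_n}) : clause n := [set (i, true) | i in V].

(* Main.v *)
Require Import Defs.
From mathcomp Require Import all_boot zify.
Set Implicit Arguments. Unset Strict Implicit. Unset Printing Implicit Defensive.

Definition restr n (i : 'I_n) (F : cnf n) : cnf n :=
  [set (C :\ ((i, false) : lit n)) | C in [set C in F | (i, true) \notin C]].

Lemma clause_restr n (i : 'I_n) (a : assignment n) (C : clause n) :
  (i, true) \notin C -> clause_sat a (C :\ (i, false)) = clause_sat (i |: a) C.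
Proof.
move=> Hi; rewrite /clause_sat; apply/existsP/existsP => [[l /andP[Hl Hs]] | [l /andP[Hl Hs]]].
- exists l; move: Hl; rewrite !inE => /andP[Hne HlC]; rewrite HlC /=.
  move: Hs Hne HlC; rewrite /lit_sat in_setU1; case: l => j b /= Hs Hne HlC.
  case: (eqVneq j i) => [Eji|] //=; subst j.
  case: b Hs Hne HlC => /= [_ _ HC|_]; first by rewrite HC in Hi.
  by rewrite eqxx.
- exists l; move: Hs Hl; rewrite /lit_sat !inE; case: l => j b /= Hs HlC.
  rewrite HlC andbT.
  case: (eqVneq j i) Hs => [Eji|Hji] /=.
  2:{ move=> ->; rewrite andbT; by apply: contraNneq Hji => -[->]. }
  subst j; case: b HlC => //= HC _; by rewrite HC in Hi.
Qed.

Lemma cnf_restr n (i : 'I_n) (a : assignment n) (F : cnf n) :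
  cnf_sat a (restr i F) = cnf_sat (i |: a) F.
Proof.
apply/forallP/forallP => H C.
- apply/implyP => HC. case Hi: ((i, true) \in C).
  + by apply/existsP; exists (i, true); rewrite Hi /lit_sat /= setU11.
  + have := H (C :\ (i, false)); rewrite -clause_restr ?Hi //.
    move/implyP; apply; apply/imsetP; exists C => //; by rewrite inE HC Hi.
- apply/implyP => /imsetP [C0]; rewrite inE => /andP[HC0 Hi] ->.
  rewrite clause_restr //; exact: (implyP (H C0) HC0).
Qed.

Lemma cnf_restrD n (i : 'I_n) (a : assignment n) (F : cnf n) :
  cnf_sat (a :\ i) (restr i F) = cnf_sat a (restr i F).
Proof.
rewrite !cnf_restr; congr cnf_sat; apply/setP => x; rewrite !inE.
by case: (eqVneq x i).
Qed.

Lemma kCNF_restr n k (i : 'I_n) (F : cnf n) : is_kCNF k F -> is_kCNF k (restr i F).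
Proof.
move=> /forallP H; apply/forallP => C'; apply/implyP => /imsetP [C]; rewrite inE.
move=> /andP[HC _] ->; apply: leq_trans (implyP (H C) HC).
by apply: subset_leq_card; apply: subsetDl.
Qed.

Lemma adm_restr n t (i : 'I_n) (F : cnf n) : admissible t.+1 F -> admissible t (restr i F).
Proof.
move=> /forallP H; apply/forallP => a; apply/implyP; rewrite cnf_restr => Ha.
have := implyP (H _) Ha; rewrite cardsU1; case: (i \in a) => /=; lia.
Qed.

Lemma sum_eq_le (I : finType) (P : pred I) (f g : I -> nat) :
  (forall i, P i -> f i <= g i) -> \sum_(i | P i) g i <= \sum_(i | P i) f i ->
  forall i, P i -> f i = g i.
Proof.
move=> Hle Hs i Pi.
have L := @leqif_sum I P (fun i => f i == g i) f g (fun i Pi => leqif_eq (Hle i Pi)).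
move: Hs; rewrite (geq_leqif L) => /forallP /(_ i); rewrite Pi /= => /eqP //.
Qed.

Lemma cardI_sum n (a V : {set 'I_n}) : #|a :&: V| = \sum_(i in V) (i \in a).
Proof.
rewrite -sum1_card (eq_bigl (fun i => (i \in V) && (i \in a))); last first.
  by move=> x; rewrite inE andbC.
rewrite big_mkcondr /=; apply: eq_bigr => i _; by case: (i \in a).
Qed.

Lemma sum_hits n t (F : cnf n) (V : {set 'I_n}) :
  \sum_(a in sat_t t F) #|a :&: V| = \sum_(i in V) #|[set a in sat_t t F | i \in a]|.
Proof.
under eq_bigr => a _ do rewrite cardI_sum.
rewrite exchange_big /=; apply: eq_bigr => i _.
rewrite -sum1_card (eq_bigl (fun a => (a \in sat_t t F) && (i \in a))); last first.
  by move=> x; rewrite inE.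
rewrite big_mkcondr /=; apply: eq_bigr => a _; by case: (i \in a).
Qed.

Lemma pos_of_unsat n (C : clause n) : ~~ clause_sat set0 C -> forall l, l \in C -> l.2.
Proof.
move=> /existsPn H l Hl; have := H l; rewrite Hl /lit_sat inE /=.
by case: l.2.
Qed.

Lemma hits n t (F : cnf n) (C : clause n) (a : assignment n) :
  C \in F -> ~~ clause_sat set0 C -> a \in sat_t t F -> 0 < #|a :&: [set l.1 | l in C]|.
Proof.
move=> HC Hu; rewrite inE => /andP[/forallP /(_ C) Hs _].
move: (implyP Hs HC) => /existsP [l /andP[Hl Hls]].
rewrite card_gt0; apply/set0Pn; exists l.1; rewrite inE; apply/andP; split.
  by move: Hls; rewrite /lit_sat (pos_of_unsat Hu Hl) => /eqP ->.
by apply/imsetP; exists l.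
Qed.

Lemma Ai_le n t (F : cnf n) (i : 'I_n) :
  #|[set a in sat_t t.+1 F | i \in a]| <= #|sat_t t (restr i F)|.
Proof.
rewrite -(@card_in_imset _ _ (fun a => a :\ i)).
  apply: subset_leq_card; apply/subsetP => b /imsetP [a]; rewrite !inE.
  move=> /andP[/andP[Hs Hc] Hi] ->; rewrite cnf_restrD cnf_restr.
  have -> : i |: a = a by apply/setP => x; rewrite !inE; case: eqP => // ->.
  rewrite Hs /=.
  by move: Hc; rewrite (cardsD1 i) Hi add1n eqSS.
move=> a b; rewrite !inE => /andP[_ Ha] /andP[_ Hb] E.
by rewrite -(setD1K Ha) -(setD1K Hb) E.
Qed.

Lemma bound n k t : forall F : cnf n, is_kCNF k F -> admissible t F -> #|sat_t t F| <= k ^ t.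
Proof.
elim: t => [|t IH] F Hk Ha.
  rewrite expn0 -(cards1 (set0 : assignment n)); apply: subset_leq_card.
  apply/subsetP => a; rewrite !inE => /andP[_ /eqP /cards0_eq ->] //.
have : ~~ cnf_sat set0 F.
  by apply/negP => Hs; have := implyP (forallP Ha set0) Hs; rewrite cards0.
move=> /forallPn [C]; rewrite negb_imply => /andP[HC Hu].
set V := [set l.1 | l in C].
have E1 : #|sat_t t.+1 F| <= \sum_(a in sat_t t.+1 F) #|a :&: V|.
  rewrite -sum1_card; apply: leq_sum => a Ha'; exact: hits HC Hu Ha'.
have E2 : \sum_(i in V) #|[set a in sat_t t.+1 F | i \in a]| <= \sum_(i in V) k ^ t.
  apply: leq_sum => i _; apply: leq_trans (Ai_le _ _ _) _.
  apply: IH; [exact: kCNF_restr | exact: adm_restr].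
have E3 : #|V| <= k.
  apply: leq_trans (leq_imset_card _ _) _; exact: (implyP (forallP Hk C) HC).
rewrite sum_nat_const in E2; rewrite sum_hits in E1.
rewrite expnS; apply: leq_trans E1 _; apply: leq_trans E2 _.
by rewrite leq_mul2r E3 orbT.
Qed.

Lemma clause_pos n (a V : {set 'I_n}) : clause_sat a (pos_clause V) = (a :&: V != set0).
Proof.
apply/existsP/set0Pn => [[l /andP[/imsetP [x Hx ->] Hs]] | [x]].
  by exists x; rewrite inE Hx andbT; move: Hs; rewrite /lit_sat /= => /eqP.
rewrite inE => /andP[Ha HV]; exists (x, true); rewrite /lit_sat /= Ha andbT.
by apply/imsetP; exists x.
Qed.

Lemma hit_card n (I : finType) (P : {set I}) (V : I -> {set 'I_n}) (a : {set 'I_n}) :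
  (forall j j', j \in P -> j' \in P -> j != j' -> [disjoint V j & V j']) ->
  (forall j, j \in P -> a :&: V j != set0) -> #|P| <= #|a|.
Proof.
move=> Hd Hh.
pose f j := [pick x in a :&: V j].
have Hf : forall j, j \in P -> exists2 x, f j = Some x & x \in a :&: V j.
  move=> j Hj; rewrite /f; case: pickP => [x Hx|H0]; first by exists x.
  by move: (Hh j Hj) => /set0Pn [x]; rewrite H0.
rewrite -(@card_in_imset _ _ f P); last first.
  move=> j j' Hj Hj' E; apply/eqP; apply: contraT => Hne.
  have := Hd j j' Hj Hj' Hne; move: (Hf j Hj) (Hf j' Hj') => [x Ex Hx] [x' Ex' Hx'].
  rewrite E Ex' in Ex; case: Ex => Ex; subst x'.
  move: Hx Hx'; rewrite !inE => /andP[_ H1] /andP[_ H2].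
  by move/disjoint_setI0/setP/(_ x); rewrite !inE H1 H2.
rewrite -(@card_imset _ _ Some a); last exact: Some_inj.
apply: subset_leq_card; apply/subsetP => y /imsetP [j Hj ->].
move: (Hf j Hj) => [x -> Hx]; apply/imsetP; exists x => //.
by move: Hx; rewrite inE => /andP[].
Qed.

Lemma divmod_uniq k j j' r r' : r < k -> r' < k -> j * k + r = j' * k + r' -> j = j' /\ r = r'.
Proof.
move=> Hr Hr' E.
have Hk : 0 < k by apply: leq_ltn_trans Hr.
have Ed : (j * k + r) %/ k = (j' * k + r') %/ k by rewrite E.
have Em : (j * k + r) %% k = (j' * k + r') %% k by rewrite E.
rewrite !divnMDl // !divn_small // !addn0 in Ed.
by rewrite !modnMDl !modn_small in Em.
Qed.

Section Lower.
Variables (k t n : nat) (hk : 1 <= k) (hn : k * t <= n).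

Definition blk (j : 'I_t) : {set 'I_n} := [set x : 'I_n | (j * k <= x) && (x < j * k + k)].
Definition Gf : cnf n := [set pos_clause (blk j) | j : 'I_t].

Lemma lt_blk (j : 'I_t) (r : 'I_k) : j * k + r < n.
Proof.
have H1 : j.+1 * k <= t * k by rewrite leq_mul2r ltn_ord orbT.
have H2 := ltn_ord r. have H3 := hn. rewrite mulSn in H1. rewrite mulnC in H3. lia.
Qed.

Definition gpt (f : {ffun 'I_t -> 'I_k}) (j : 'I_t) : 'I_n := Ordinal (lt_blk j (f j)).
Definition mk (f : {ffun 'I_t -> 'I_k}) : assignment n := [set gpt f j | j in 'I_t].

Lemma blk_disj (j j' : 'I_t) : j != j' -> [disjoint blk j & blk j'].
Proof.
move=> Hne; rewrite -setI_eq0; apply/eqP/setP => x; rewrite !inE.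
apply/negP => /andP[/andP[a1 a2] /andP[b1 b2]].
case: (ltngtP j j') => Hjj.
  have : j.+1 * k <= j' * k by rewrite leq_mul2r Hjj orbT.
  rewrite mulSn; lia.
  have : j'.+1 * k <= j * k by rewrite leq_mul2r Hjj orbT.
  rewrite mulSn; lia.
by move: Hne; rewrite (val_inj Hjj) eqxx.
Qed.

Lemma card_blk (j : 'I_t) : #|blk j| <= k.
Proof.
rewrite cardE -(size_map val) -(size_iota (j * k) k).
apply: uniq_leq_size; first by rewrite map_inj_uniq ?enum_uniq //; exact: val_inj.
move=> x /mapP [y]; rewrite mem_enum inE => /andP[h1 h2] ->.
rewrite mem_iota h1 /=; lia.
Qed.

Lemma Gf_kCNF : is_kCNF k Gf.
Proof.
apply/forallP => C; apply/implyP => /imsetP [j _ ->].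
apply: leq_trans (card_blk j); exact: leq_imset_card.
Qed.

Lemma Gf_adm : admissible t Gf.
Proof.
apply/forallP => a; apply/implyP => /forallP Hs.
rewrite -{1}(card_ord t) -cardsT.
apply: (@hit_card _ _ setT blk a) => [j j' _ _|j _]; first exact: blk_disj.
rewrite -clause_pos; apply: (implyP (Hs _)); apply/imsetP; by exists j.
Qed.

Lemma gpt_inj f : injective (gpt f).
Proof.
move=> j j' /(congr1 val) /= E; apply: val_inj.
by case: (divmod_uniq (ltn_ord (f j)) (ltn_ord (f j')) E).
Qed.

Lemma mk_sat f : mk f \in sat_t t Gf.
Proof.
rewrite inE; apply/andP; split; last first.
  by rewrite card_imset ?cardsT ?card_ord //; exact: gpt_inj.
apply/forallP => C; apply/implyP => /imsetP [j _ ->]; rewrite clause_pos.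
apply/set0Pn; exists (gpt f j); rewrite !inE; apply/andP; split.
  by apply/imsetP; exists j.
rewrite /= leq_addr /=; rewrite ltn_add2l; exact: ltn_ord.
Qed.

Lemma mk_inj : injective mk.
Proof.
move=> f f' E; apply/ffunP => j.
have : gpt f j \in mk f' by rewrite -E; apply/imsetP; exists j.
move=> /imsetP [j' _ /(congr1 val) /= E2].
case: (divmod_uniq (ltn_ord (f j)) (ltn_ord (f' j')) E2) => E3 E4.
have Ej : j = j' by apply: val_inj.
by subst j'; apply: val_inj.
Qed.

Lemma Gf_count : k ^ t <= #|sat_t t Gf|.
Proof.
have -> : k ^ t = #|[set mk f | f in {ffun 'I_t -> 'I_k}]|.
  by rewrite card_imset ?cardsT ?card_ffun ?card_ord //; exact: mk_inj.
apply: subset_leq_card; apply/subsetP => a /imsetP [f _ ->]; exact: mk_sat.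
Qed.

End Lower.

Lemma posC n (C : clause n) : ~~ clause_sat set0 C -> pos_clause [set l.1 | l in C] = C.
Proof.
move=> Hu; apply/setP => l; apply/imsetP/idP => [[j /imsetP [l' Hl' ->] ->]|Hl].
  by have := pos_of_unsat Hu Hl'; case: l' Hl' => j' [] //.
exists l.1; first by apply/imsetP; exists l.
by have := pos_of_unsat Hu Hl; case: l Hl => j' [].
Qed.

Lemma card_pos n (D : {set 'I_n}) : #|pos_clause D| = #|D|.
Proof. by rewrite card_imset // => x y []. Qed.

Lemma sat_sub n t (F G : cnf n) : G \subset F -> sat_t t F \subset sat_t t G.
Proof.
move=> /subsetP H; apply/subsetP => a; rewrite !inE => /andP[/forallP Hs ->].
rewrite andbT; apply/forallP => C; apply/implyP => HC; exact: (implyP (Hs C) (H C HC)).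
Qed.

Lemma lift_clause n k (i : 'I_n) (F : cnf n) (D : {set 'I_n}) :
  is_kCNF k F -> #|D| = k -> pos_clause D \in restr i F -> pos_clause D \in F /\ i \notin D.
Proof.
move=> Hk HD /imsetP [C0]; rewrite inE => /andP[HC0 Hi] E.
have HiD : i \notin D.
  apply/negP => HiD; have : (i, true) \in pos_clause D by apply/imsetP; exists i.
  by rewrite E !inE (negbTE Hi) andbF.
split => //.
case Hf: ((i, false) \in C0).
  have := implyP (forallP Hk C0) HC0; rewrite (cardsD1 (i, false)) Hf -E card_pos HD.
  by rewrite add1n ltnn.
have -> : pos_clause D = C0 by rewrite E; apply/setP => l; rewrite !inE;
  case: eqP => // ->; rewrite Hf.
done.
Qed.

Lemma posW_sat n t (W : {set {set 'I_n}}) (b : {set 'I_n}) :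
  #|b| = t -> (forall D, D \in W -> b :&: D != set0) ->
  b \in sat_t t [set pos_clause D | D in W].
Proof.
move=> Hb Hh; rewrite inE Hb eqxx andbT; apply/forallP => C.
apply/implyP => /imsetP [D HD ->]; rewrite clause_pos; exact: Hh.
Qed.

Lemma transversal n (W : {set {set 'I_n}}) (D : {set 'I_n}) (x : 'I_n) :
  (forall D D', D \in W -> D' \in W -> D != D' -> [disjoint D & D']) ->
  (forall D, D \in W -> D != set0) -> D \in W -> x \in D ->
  exists b : {set 'I_n}, [/\ x \in b, #|b| = #|W|,
     (forall y, y \in b -> exists2 D', D' \in W & y \in D') &
     (forall D', D' \in W -> b :&: D' != set0)].
Proof.
move=> Hd Hne HD Hx.
pose h (D' : {set 'I_n}) := if x \in D' then x else odflt x [pick y in D'].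
have Hh : forall D', D' \in W -> h D' \in D'.
  move=> D' HD'; rewrite /h; case: ifP => // _.
  case: pickP => [y Hy|H0] //=; move: (Hne D' HD') => /set0Pn [y]; by rewrite H0.
exists [set h D' | D' in W]; split.
- by apply/imsetP; exists D => //; rewrite /h Hx.
- apply: card_in_imset => D1 D2 H1 H2 E; apply/eqP; apply: contraT => Hn.
  have := Hd D1 D2 H1 H2 Hn; move/disjoint_setI0/setP/(_ (h D1)).
  by rewrite !inE Hh // E Hh.
- by move=> y /imsetP [D' HD' ->]; exists D' => //; exact: Hh.
- move=> D' HD'; apply/set0Pn; exists (h D'); rewrite inE Hh // andbT.
  by apply/imsetP; exists D'.
Qed.

Lemma moreover n k (hk : 1 <= k) t : forall F : cnf n,
  is_kCNF k F -> admissible t F -> #|sat_t t F| = k ^ t ->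
  exists W : {set {set 'I_n}}, [/\ #|W| = t,
    (forall D, D \in W -> #|D| = k /\ pos_clause D \in F) &
    (forall D D', D \in W -> D' \in W -> D != D' -> [disjoint D & D'])].
Proof.
elim: t => [|t IH] F Hk Ha Hc.
  by exists set0; split; rewrite ?cards0 // => D; rewrite inE.
have : ~~ cnf_sat set0 F.
  by apply/negP => Hs; have := implyP (forallP Ha set0) Hs; rewrite cards0.
move=> /forallPn [C]; rewrite negb_imply => /andP[HC Hu].
set V := [set l.1 | l in C].
have Hkt : 0 < k ^ t by rewrite expn_gt0 hk.
have E1 : #|sat_t t.+1 F| <= \sum_(a in sat_t t.+1 F) #|a :&: V|.
  rewrite -sum1_card; apply: leq_sum => a Ha'; exact: hits HC Hu Ha'.
have Hbi : forall i, #|sat_t t (restr i F)| <= k ^ t.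
  move=> i; apply: bound; [exact: kCNF_restr | exact: adm_restr].
have E2 : \sum_(i in V) #|[set a in sat_t t.+1 F | i \in a]| <= \sum_(i in V) k ^ t.
  apply: leq_sum => i _; apply: leq_trans (Ai_le _ _ _) _; exact: Hbi.
have E3 : #|V| <= k.
  apply: leq_trans (leq_imset_card _ _) _; exact: (implyP (forallP Hk C) HC).
have E2' := E2; rewrite sum_nat_const in E2'.
have E1' := E1; rewrite sum_hits in E1'.
have HV : #|V| = k.
  apply/eqP; rewrite eqn_leq E3 /= -(leq_pmul2r Hkt) -expnS -Hc.
  exact: leq_trans E1' E2'.
have Hone : forall a, a \in sat_t t.+1 F -> 1 = #|a :&: V|.
  apply: sum_eq_le => [a Ha'|]; first exact: hits HC Hu Ha'.
  rewrite sum1_card sum_hits Hc; apply: leq_trans E2' _.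
  by rewrite expnS HV.
have HAi : forall i, i \in V -> #|[set a in sat_t t.+1 F | i \in a]| = k ^ t.
  apply: sum_eq_le => [i _|]; first by apply: leq_trans (Ai_le _ _ _) _; exact: Hbi.
  rewrite sum_nat_const HV -expnS -Hc -sum_hits; exact: E1.
have Hri : forall i, i \in V -> #|sat_t t (restr i F)| = k ^ t.
  move=> i Hi; apply/eqP; rewrite eqn_leq Hbi -(HAi i Hi); exact: Ai_le.
have : V != set0 by rewrite -card_gt0 HV.
move=> /set0Pn [i Hi].
have [W' [HW'c HW' HW'd]] := IH (restr i F) (kCNF_restr _ Hk) (adm_restr _ Ha) (Hri i Hi).
have Hlift : forall D, D \in W' -> pos_clause D \in F /\ i \notin D.
  move=> D HD; have [H1 H2] := HW' D HD; exact: lift_clause Hk H1 H2.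
have Hne : forall D, D \in W' -> D != set0.
  by move=> D HD; rewrite -card_gt0 (proj1 (HW' D HD)).
have Hdisj : forall D, D \in W' -> [disjoint V & D].
  move=> D HD; rewrite -setI_eq0; apply/eqP/setP => x; rewrite !inE.
  apply/negP => /andP[HxV HxD].
  have [b [Hxb Hbc Hbin Hbh]] := transversal HW'd Hne HD HxD.
  set G' := [set pos_clause D | D in W'].
  have Hsub : sat_t t (restr i F) \subset sat_t t G'.
    apply: sat_sub; apply/subsetP => c /imsetP [D' HD' ->]; exact: (proj2 (HW' D' HD')).
  have Heq : sat_t t (restr i F) = sat_t t G'.
    apply/eqP; rewrite eqEcard Hsub Hri //=; apply: bound.
      apply/forallP => c; apply/implyP => /imsetP [D' HD' ->].
      by rewrite card_pos (proj1 (HW' D' HD')).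
    apply/forallP => a; apply/implyP => /forallP Hs; rewrite -HW'c.
    apply: (@hit_card _ _ W' id a) => // D' HD'; rewrite -clause_pos.
    by apply: (implyP (Hs _)); apply/imsetP; exists D'.
  have Hb : b \in sat_t t (restr i F) by rewrite Heq; apply: posW_sat; rewrite ?Hbc.
  have Hib : i \notin b.
    apply/negP => /Hbin [D' HD' HiD']; have := proj2 (Hlift D' HD'); by rewrite HiD'.
  have Ha2 : i |: b \in sat_t t.+1 F.
    move: Hb; rewrite !inE cnf_restr cardsU1 Hib => /andP[-> /eqP ->].
    by rewrite add1n eqxx.
  have Hxi : x != i by apply: contraNneq (proj2 (Hlift D HD)) => <-.
  have := Hone _ Ha2.
  have : [set i; x] \subset (i |: b) :&: V.
    apply/subsetP => y; rewrite !inE => /orP[] /eqP ->; rewrite ?eqxx ?Hi ?HxV ?Hxb ?orbT //.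
  move/subset_leq_card; rewrite cards2 eq_sym Hxi => H1 H2; by rewrite -H2 in H1.
have HVW : V \notin W'.
  apply/negP => HVW; have := Hdisj V HVW; rewrite -setI_eq0 setIid.
  by move/eqP => H0; move: (Hne V HVW); rewrite H0 eqxx.
exists (V |: W'); split.
- by rewrite cardsU1 HVW HW'c.
- move=> D; rewrite !inE => /orP[/eqP ->|HD]; last by split; [exact: (proj1 (HW' D HD))|exact: (proj1 (Hlift D HD))].
  by rewrite HV posC.
- move=> D D'; rewrite !inE => /orP[/eqP ->|HD] /orP[/eqP ->|HD'] Hn.
  + by rewrite eqxx in Hn.
  + exact: Hdisj.
  + by rewrite disjoint_sym; apply: Hdisj.
  + exact: HW'd.
Qed.

Theorem theorem1 (k t n : nat) (hk : 1 <= k) (hn : k * t <= n) :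
  S n t k = k ^ t /\
  (forall F : cnf n, is_kCNF k F -> admissible t F -> #|sat_t t F| = k ^ t ->
     exists V : 'I_t -> {set 'I_n},
       (forall j, #|V j| = k /\ pos_clause (V j) \in F) /\
       (forall j j', j != j' -> [disjoint V j & V j'])).
Proof.
split.
  apply/eqP; rewrite eqn_leq; apply/andP; split.
    by apply/bigmax_leqP => F /andP[Ha Hk]; exact: bound.
  apply: leq_trans (Gf_count hk hn) _.
  by apply: (leq_bigmax_cond (Gf k t n)); rewrite Gf_adm // Gf_kCNF.
move=> F Hk Ha Hc.
have [W [HWc HW HWd]] := moreover hk Hk Ha Hc.
exists (fun j => enum_val (cast_ord (esym HWc) j)); split.
  move=> j; exact: HW (enum_valP _).
move=> j j' Hne; apply: HWd; try exact: enum_valP.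
apply: contra Hne => /eqP /enum_val_inj /cast_ord_inj ->; by [].
Qed.
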